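(* If $X\subseteq V$ is such that $D[X]$ is a directed sub-block, then there exists a subsystem state $\psi^A_X$ with $A:X\to\{S,I\}$ belonging to $M_E$.
   Context: $D=(V,A)$ is a directed graph on $V=\{1,\dots,N\}$ with rates $T_{ij}\ge0$, $T_{ij}>0$ iff $(j,i)\in A$, $T_{ii}=0$. A subsystem state is $\psi^A_W$ with $W\subseteq V$ nonempty, $A:W\to\{S,I,R\}$; $S_i,I_i$ are single-node states; for $n\notin W$, $\psi^A_WI_n$ is the state on $W\cup\{n\}$ extending $A$ with $n$ in state $I$; $h^X_k(\psi^A_W)$ changes the state of $k\in W$ to $X$. $\mathrm{IN}(X)$ is the set of nodes from which some member of $X$ is reachable by a directed path; $f_E(X,Y,Z)=1$ iff $\mathrm{IN}(X)\cap\mathrm{IN}(Y)=\emptyset$ in $D-Z$ (else $0$), with the convention $f_E(\{n\},\emptyset,\{k\})=0$. A state $\psi^A_W$, $A:W\to\{S,I\}$, induces: $\psi^A_W$; $h^S_k(\psi^A_W)$ for $k\in W$ with $A_k=I$ and $T_{kn}>0$ for some $n\in W$ with $A_n=I$; and for each $k\in W$, $n\in V\setminus W$ with $T_{kn}>0$: the state $h^S_k(\psi^A_W)I_n$ if $f_E(\{n\},W\setminus\{k\},\{k\})=0$, or the states $h^S_k(\psi^A_W)$, $S_kI_n$, $S_k$ if it equals $1$. $M_E$ is the smallest set of subsystem states containing all $S_i,I_i$ and closed under induced states. $D[X]$ is the subgraph induced on $X$. A graph is biconnected if it has at least three vertices, is connected, and remains connected after deleting any single vertex. $D[X]$ is a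 directed sub-block if some node of $X$ is reachable by a directed path within $D[X]$ from every other node of $X$ and the underlying undirected graph of $D[X]$ is biconnected. *)

(* Defs.v *)
From HB Require Import structures.
From mathcomp Require Import all_boot all_order all_algebra.
Set Implicit Arguments. Unset Strict Implicit. Unset Printing Implicit Defensive.
Import Order.TTheory GRing.Theory Num.Theory.
Local Open Scope ring_scope.

Inductive st := Sst | Ist | Rst.

Section Epidemic.
Variables (R : realFieldType) (N : nat) (T : 'I_N -> 'I_N -> R).
(* Vertices are 'I_N (i.e. {0,...,N-1}, a relabelling of {1,...,N}).
   T i j > 0  iff  (j,i) is an arc, i.e. the arc relation is  j -> i. *)

Definition arc (u v : 'I_N) : bool := 0 < T v u.

(* A (partial) state: psi i = None iff i is not in the support W. *)
Definition sstate := {ffun 'I_N -> option st}.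

Definition dom (psi : sstate) : {set 'I_N} := [set i | psi i].

Definition is_subsystem_state (psi : sstate) : Prop := exists i, psi i.

Definition SIvalued (psi : sstate) : Prop := forall i, psi i <> Some Rst.

Definition single (i : 'I_N) (x : st) : sstate :=
  [ffun j => if j == i then Some x else None].

Definition SkIn (k n : 'I_N) : sstate :=
  [ffun j => if j == k then Some Sst else if j == n then Some Ist else None].

Definition h (x : st) (k : 'I_N) (psi : sstate) : sstate :=
  [ffun j => if j == k then Some x else psi j].

Definition addI (psi : sstate) (n : 'I_N) : sstate :=
  [ffun j => if j == n then Some Ist else psi j].

Definition arc_minus (Z : {set 'I_N}) : rel 'I_N :=
  fun u v => [&& u \notin Z, v \notin Z & arc u v].

Definition IN (X Z : {set 'I_N}) : {set 'I_N} :=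
  [set u | (u \notin Z) && [exists x in X, (x \notin Z) && connect (arc_minus Z) u x]].

(* f_E(X,Y,Z), with the convention f_E({n}, emptyset, {k}) = 0 *)
Definition fE (X Y Z : {set 'I_N}) : bool :=
  if [&& Y == set0, #|X| == 1%N & #|Z| == 1%N] then false
  else [disjoint IN X Z & IN Y Z].

(* phi is a state induced by psi (psi assumed to have values in {S,I}) *)
Definition induces (psi phi : sstate) : Prop :=
  phi = psi
  \/ (exists k n, psi k = Some Ist /\ psi n = Some Ist /\ 0 < T k n /\ phi = h Sst k psi)
  \/ (exists k n, psi k /\ psi n = None /\ 0 < T k n /\
       ((fE [set n] (dom psi :\ k) [set k] = false /\ phi = addI (h Sst k psi) n)
        \/ (fE [set n] (dom psi :\ k) [set k] = true /\
            (phi = h Sst k psi \/ phi = SkIn k n \/ phi = single k Sst)))).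

Inductive inME : sstate -> Prop :=
| ME_S i : inME (single i Sst)
| ME_I i : inME (single i Ist)
| ME_step psi phi : inME psi -> SIvalued psi -> is_subsystem_state psi ->
    induces psi phi -> inME phi.

Definition uarc_in (Y : {set 'I_N}) : rel 'I_N :=
  fun a b => [&& a \in Y, b \in Y & arc a b || arc b a].

Definition uconnected_on (Y : {set 'I_N}) : Prop :=
  forall u v, u \in Y -> v \in Y -> connect (uarc_in Y) u v.

Definition biconnected_on (Y : {set 'I_N}) : Prop :=
  (3 <= #|Y|)%N /\ uconnected_on Y /\ forall v, v \in Y -> uconnected_on (Y :\ v).

Definition darc_in (Y : {set 'I_N}) : rel 'I_N :=
  fun a b => [&& a \in Y, b \in Y & arc a b].

Definition directed_subblock (X : {set 'I_N}) : Prop :=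
  (exists2 r, r \in X & forall u, u \in X -> connect (darc_in X) u r)
  /\ biconnected_on X.

End Epidemic.

(* Main.v *)
Require Import Defs.
From HB Require Import structures.
From mathcomp Require Import all_boot all_order all_algebra.
Import Order.TTheory GRing.Theory Num.Theory.
Local Open Scope ring_scope.

Lemma crossing (U : finType) (e : rel U) (P : pred U) x y :
  connect e x y -> ~~ P x -> P y ->
  exists a b, [/\ connect e x a, ~~ P a, e a b & P b].
Proof.
move/connectP=> [p]; elim: p x => [|z p IH] x /=.
  by move=> _ -> Px Py; rewrite Py in Px.
move=> /andP[exz pz] ey Px Py.
case Pz: (P z).
  by exists x, z; split; rewrite ?connect0 ?Pz.
have [a [b [c1 c2 c3 c4]]] := IH z pz ey (negbT Pz) Py.
exists a, b; split=> //; exact: connect_trans (connect1 exz) c1.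
Qed.

Lemma closure_conn (U : finType) (e : rel U) (Q : pred U) x y :
  connect e x y -> (forall a b, e a b -> Q b) -> Q x -> Q y.
Proof.
move/connectP=> [p]; elim: p x => [|z p IH] x /=; first by move=> _ ->.
move=> /andP[exz pz] ey HQ Qx; exact: IH pz ey HQ (HQ _ _ exz).
Qed.

Section Ext.
Variables (R : realFieldType) (N : nat) (T : 'I_N -> 'I_N -> R).

Lemma lift_conn (X : {set 'I_N}) k u v :
  connect (darc_in T (X :\ k)) u v -> connect (arc_minus T [set k]) u v.
Proof.
apply: connect_sub => a b /and3P[ha hb hab]; apply: connect1.
move: ha hb; rewrite !in_setD1 => /andP[ak _] /andP[bk _].
by rewrite /arc_minus !in_set1 ak bk.
Qed.

Lemma fE_false n k W :
  (W :\ k == set0) ||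
  [exists u, (u \in IN T [set n] [set k]) && (u \in IN T (W :\ k) [set k])] ->
  fE T [set n] (W :\ k) [set k] = false.
Proof.
rewrite /fE => /orP[/eqP->|/existsP[u /andP[h1 h2]]].
  by rewrite eqxx !cards1.
case: ifP => // _; apply/negP => Hd.
by move: (disjointFl Hd h2); rewrite h1.
Qed.

Lemma extend (X W : {set 'I_N}) r :
  r \in X -> (forall u, u \in X -> connect (darc_in T X) u r) ->
  (forall v, v \in X -> uconnected_on T (X :\ v)) ->
  r \in W -> W \subset X -> W != X ->
  exists n k, [/\ n \in X, n \notin W, k \in W, 0 < T k n &
                  fE T [set n] (W :\ k) [set k] = false].
Proof.
move=> rX hr hbi rW WX WnX.
have [z zX zW] : exists2 z, z \in X & z \notin W.
  apply/subsetPn; apply: contra WnX => XW; by rewrite eqEsubset WX XW.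
have [n [k [_ nW /and3P[nX kX ank] kW]]] :=
  @crossing _ _ (mem W) _ _ (hr z zX) zW rW.
have nk : n != k by apply: contraNneq nW => ->.
set ek := darc_in T (X :\ k).
set good := fun v => [exists w in W :\ k, connect ek v w].
have ekW : forall a b, ek a b -> b \in X :\ k by move=> a b /and3P[].
case: (boolP (W :\ k == set0)) => [W0|Wn0].
  by exists n, k; split=> //; apply: fE_false; rewrite W0.
have inIN1 : forall u c, u != k -> c != k -> connect (arc_minus T [set k]) u c ->
    u \in IN T [set c] [set k].
  move=> u c uk ck uc; rewrite inE in_set1 uk /=.
  by apply/existsP; exists c; rewrite in_set1 eqxx in_set1 ck.
have inIN2 : forall u, u != k -> good u -> u \in IN T (W :\ k) [set k].
  move=> u uk /existsP[w /andP[wW uw]]; rewrite inE in_set1 uk /=.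
  apply/existsP; exists w; rewrite wW /= in_set1.
  move: wW; rewrite in_setD1 => /andP[-> _] /=; exact: lift_conn X k u w uw.
case: (boolP (good n)) => gn.
  exists n, k; split=> //; apply: fE_false; apply/orP; right.
  by apply/existsP; exists n; rewrite inIN1 ?connect0 // inIN2.
have [w0 w0W] := set0Pn _ Wn0.
have w0X : w0 \in X :\ k.
  by move: w0W; rewrite !in_setD1 => /andP[-> /(subsetP WX)].
have nXk : n \in X :\ k by rewrite in_setD1 nk.
have gw0 : good w0 by apply/existsP; exists w0; rewrite w0W connect0.
have [a [b [_ ga /and3P[aX bX abba] gb]]] :=
  @crossing _ _ good _ _ (hbi k kX n w0 nXk w0X) gn gw0.
have ba : Defs.arc T b a.
  case/orP: abba => // ab; case/negP: ga.
  case/existsP: gb => w /andP[wW bw]; apply/existsP; exists w.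
  have eab : ek a b by apply/and3P; split.
  by rewrite wW (connect_trans (connect1 eab) bw).
have aX' : a \in X by move: aX; rewrite in_setD1 => /andP[_ ->].
have h1 : ~~ ~~ connect ek a a by rewrite connect0.
have h2 : ~~ connect ek a r.
  apply/negP => ar; case/negP: ga; apply/existsP; exists r; rewrite ar andbT.
  have := @closure_conn _ ek (fun v => v \in X :\ k) a r ar ekW aX.
  by rewrite !in_setD1 rW andbT => /andP[-> _].
have [c [d [_ /negPn xc /and3P[cX dX cd] xd]]] :=
  @crossing _ _ (fun v => ~~ connect ek a v) _ _ (hr a aX') h1 h2.
have cXk : c \in X :\ k := @closure_conn _ ek (fun v => v \in X :\ k) a c xc ekW aX.
have dk : d = k.
  apply/eqP; apply: contraNT xd => dk; apply: connect_trans xc (connect1 _).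
  by apply/and3P; split=> //; rewrite in_setD1 dk.
subst d.
have cW : c \notin W.
  apply/negP => cW; case/negP: ga; apply/existsP; exists c; rewrite xc andbT.
  by move: cXk; rewrite !in_setD1 cW => /andP[-> _].
move: cXk; rewrite in_setD1 => /andP[ck _].
move: bX; rewrite in_setD1 => /andP[bk _].
move: aX; rewrite in_setD1 => /andP[ak _].
exists c, k; split=> //; apply: fE_false; apply/orP; right.
apply/existsP; exists b; rewrite inIN2 // andbT inIN1 //.
apply: connect_trans (connect1 _) (lift_conn X k a c xc).
by rewrite /arc_minus !in_set1 bk ak.
Qed.
End Ext.

Theorem mainTheorem9 (R : realFieldType) (N : nat) (T : 'I_N -> 'I_N -> R)
  (T_nonneg : forall i j, 0 <= T i j) (T_diag : forall i, T i i = 0)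
  (X : {set 'I_N}) :
  directed_subblock T X ->
  exists psi : sstate N,
    inME T psi /\ dom psi = X /\ SIvalued psi.
Proof.
move=> [[r rX hr] [_ [_ hbi]]].
have claim : forall m : nat, exists psi : sstate N,
    [/\ inME T psi, SIvalued psi, r \in dom psi, dom psi \subset X &
        ((m < #|dom psi|)%N \/ dom psi = X)].
  elim=> [|m [psi [Hin HSI rd dX Hm]]].
    exists (single r Ist).
    have dS : dom (single r Ist) = [set r].
      by apply/setP => j; rewrite !inE ffunE; case: (j == r).
    split; first exact: ME_I.
    - by move=> j; rewrite ffunE; case: (j == r).
    - by rewrite dS set11.
    - by rewrite dS sub1set.
    - by left; rewrite dS cards1.
  case: (boolP (dom psi == X)) => [/eqP dE|dnX].
    by exists psi; split=> //; right.
  have [n [k [nX nW kW Tkn hfE]]] := @extend _ _ T X (dom psi) r rX hr hbi rd dX dnX.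
  set phi := addI (h Sst k psi) n.
  have dphi : dom phi = n |: dom psi.
    apply/setP => j; rewrite !inE !ffunE.
    case: (j =P n) => //= _; case: (j =P k) => // ->.
    by move: kW; rewrite inE.
  exists phi; split.
  - apply: (ME_step Hin HSI); first by exists r; move: rd; rewrite inE.
    right; right; exists k, n; split; [|split; [|split]].
    + by move: kW; rewrite inE.
    + move: nW; rewrite inE; case E: (psi n) => //.
    + exact: Tkn.
    + by left; split.
  - rewrite /SIvalued => j; rewrite /phi !ffunE.
    case: (j == n) => //; case: (j == k) => //; exact: HSI.
  - by rewrite dphi; apply: setU1r.
  - by rewrite dphi subUset sub1set nX dX.
  - case: Hm => Hm; last by rewrite Hm in dnX; rewrite eqxx in dnX.
    by left; rewrite dphi cardsU1 nW.
have [psi [Hin HSI _ dX [Hm|Hm]]] := claim #|X|.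
  by have := subset_leq_card dX; rewrite leqNgt Hm.
by exists psi.
Qed.
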